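(* Let $R$ be a blind bisimulation on the nodes of a $\lambda$-graph $G$. Let $n,m,m'$ be nodes and $\tau$ a non-empty trace with $n\,R\,m$ and $m\xrightarrow{\tau}m'$. Then $n\,R\,m'$ does not hold.
   Context: A pre-$\lambda$-graph is a directed graph whose nodes are of four kinds: an application node $@(n_1,n_2)$ has exactly two children, its left child $n_1$ and its right child $n_2$; an abstraction node $\lambda(n)$ has exactly one child, its body $n$; a free variable node has no children and carries an atom $\mathrm{id}(n)$ from a fixed set of atoms, distinct free variable nodes carrying distinct atoms; a bound variable node $\mathrm{var}(l)$ has exactly one outgoing binding edge, to an abstraction node $l$ (its binder). A trace is a finite sequence of directions from $\{\swarrow,\downarrow,\searrow\}$; $\epsilon$ is the empty trace and $d\cdot\tau$ is the trace $\tau$ extended by one final step $d$. Paths $n\xrightarrow{\tau}m$ are defined inductively: $n\xrightarrow{\epsilon}n$; if $n\xrightarrow{\tau}\lambda(m)$ then $n\xrightarrow{\downarrow\cdot\tau}m$; if $n\xrightarrow{\tau}@(m_1,m_2)$ then $n\xrightarrow{\swarrow\cdot\tau}m_1$ and $n\xrightarrow{\searrow\cdot\tau}m_2$ (binding edges are never followed). The path $n\xrightarrow{\tau}$ crosses a node $m$ if either $n\xrightarrow{\tau}m$, or $\tau=d\cdot\tau'$ and $n\xrightarrow{\tau'}$ crosses $m$. A root is a node $r$ such that the only path ending in $r$ has the empty trace. A node $m$ dominates $n$ if every path from a root to $n$ crosses $m$. A $\lambda$-graph is a pre-$\lambda$-graph that has finitely many nodes, is acyclic ($n\xrightarrow{\tau}n$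 holds only for $\tau=\epsilon$), and is dominated (every bound variable node $\mathrm{var}(l)$ is dominated by its binder $l$). Two nodes are homogeneous if both are application nodes, or both abstraction nodes, or both free variable nodes, or both bound variable nodes; a binary relation $R$ on nodes is homogeneous if it only relates homogeneous nodes. Rules: $(\swarrow)$: $@(n_1,n_2)\,R\,@(m_1,m_2)$ implies $n_1\,R\,m_1$; $(\searrow)$: $@(n_1,n_2)\,R\,@(m_1,m_2)$ implies $n_2\,R\,m_2$; $(\downarrow)$: $\lambda(n)\,R\,\lambda(m)$ implies $n\,R\,m$. $R$ is propagated if closed under $(\swarrow),(\downarrow),(\searrow)$. A blind bisimulation is a homogeneous propagated relation. *)

(* Defs.v *)
From Stdlib Require Import List.
Import ListNotations.

(* Directions of a trace: swarrow (left child), down (abstraction body),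
   searrow (right child). *)
Inductive dir : Type := SW | DN | SE.

(* A trace is a list of directions; the list is stored in reverse order:
   [d :: tau] is the trace  d . tau  = tau extended by one FINAL step d. *)
Definition trace := list dir.

Inductive node_kind (V A : Type) : Type :=
| App  : V -> V -> node_kind V A
| Abs  : V -> node_kind V A
| Free : A -> node_kind V A
| BVar : V -> node_kind V A.        (* var(l), binding edge to l *)
Arguments App {V A}. Arguments Abs {V A}. Arguments Free {V A}. Arguments BVar {V A}.

Record pre_lambda_graph (A : Type) : Type := {
  node : Type;
  lab : node -> node_kind node A;
  free_inj : forall n m a, lab n = Free a -> lab m = Free a -> n = m;
  binder_abs : forall n l, lab n = BVar l -> exists b, lab l = Abs b
}.
Arguments node {A}. Arguments lab {A}.

Section Graph.
Context {A : Type} (G : pre_lambda_graph A).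

(* path n tau m  :  n --tau--> m  (binding edges never followed) *)
Inductive path : node G -> trace -> node G -> Prop :=
| path_nil  : forall n, path n [] n
| path_dn   : forall n tau m b, path n tau m -> lab G m = Abs b -> path n (DN :: tau) b
| path_sw   : forall n tau m m1 m2, path n tau m -> lab G m = App m1 m2 -> path n (SW :: tau) m1
| path_se   : forall n tau m m1 m2, path n tau m -> lab G m = App m1 m2 -> path n (SE :: tau) m2.

Fixpoint crosses (n : node G) (tau : trace) (m : node G) : Prop :=
  path n tau m \/ match tau with [] => False | _ :: tau' => crosses n tau' m end.

Definition is_root (r : node G) : Prop :=
  forall n tau, path n tau r -> tau = [].

Definition dominates (m n : node G) : Prop :=
  forall r tau, is_root r -> path r tau n -> crosses r tau m.

Definition finite_nodes : Prop := exists l : list (node G), forall v, In v l.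

Definition acyclic : Prop := forall n tau, path n tau n -> tau = [].

Definition dominated : Prop := forall v l, lab G v = BVar l -> dominates l v.

Definition is_lambda_graph : Prop := finite_nodes /\ acyclic /\ dominated.

Definition homogeneous_nodes (n m : node G) : Prop :=
  match lab G n, lab G m with
  | App _ _, App _ _ | Abs _, Abs _ | Free _, Free _ | BVar _, BVar _ => True
  | _, _ => False
  end.

Definition homogeneous (R : node G -> node G -> Prop) : Prop :=
  forall n m, R n m -> homogeneous_nodes n m.

Definition propagated (R : node G -> node G -> Prop) : Prop :=
  (forall n m n1 n2 m1 m2, lab G n = App n1 n2 -> lab G m = App m1 m2 -> R n m -> R n1 m1) /\
  (forall n m n1 n2 m1 m2, lab G n = App n1 n2 -> lab G m = App m1 m2 -> R n m -> R n2 m2) /\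
  (forall n m n' m', lab G n = Abs n' -> lab G m = Abs m' -> R n m -> R n' m').

Definition blind_bisimulation (R : node G -> node G -> Prop) : Prop :=
  homogeneous R /\ propagated R.

End Graph.

(* Main.v *)
Require Import Defs.
From Stdlib Require Import List.
Import ListNotations.
From Stdlib Require Import Lia ClassicalEpsilon PeanoNat.

Section S.
Context {A : Type} (G : pre_lambda_graph A).

Lemma path_app (a b c : node G) t1 t2 :
  path G a t1 b -> path G b t2 c -> path G a (t2 ++ t1) c.
Proof.
  intros H1 H2; induction H2; simpl; auto.
  - eapply path_dn; eauto.
  - eapply path_sw; eauto.
  - eapply path_se; eauto.
Qed.

Lemma path_split (a c : node G) t1 t2 :
  path G a (t2 ++ t1) c -> exists b, path G a t1 b /\ path G b t2 c.
Proof.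
  revert c; induction t2 as [|d t2 IH]; intros c H; simpl in *.
  - exists c; split; auto. constructor.
  - inversion H; subst;
    match goal with Hq : path G a (t2 ++ t1) _ |- _ => destruct (IH _ Hq) as [b [Hb1 Hb2]] end;
    exists b; split; auto.
    + eapply path_dn; eauto.
    + eapply path_sw; eauto.
    + eapply path_se; eauto.
Qed.

Lemma path_det (a b b' : node G) t : path G a t b -> path G a t b' -> b = b'.
Proof.
  intros H; revert b'; induction H; intros b' H'; inversion H'; subst; auto;
  match goal with IH : forall _, path G ?x ?t _ -> _, Hq : path G ?x ?t _ |- _ => specialize (IH _ Hq) end; subst; congruence.
Qed.

Lemma transfer (R : node G -> node G -> Prop) (HR : blind_bisimulation G R) x y y' s :
  R x y -> path G y s y' -> exists x', path G x s x' /\ R x' y'.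
Proof.
  destruct HR as [Hh [P1 [P2 P3]]].
  intros Hxy H; induction H.
  - exists x; split; auto; constructor.
  - destruct (IHpath Hxy) as [x' [Hp Hr]]. pose proof (Hh _ _ Hr) as Hk.
    unfold homogeneous_nodes in Hk. rewrite H0 in Hk.
    destruct (lab G x') eqn:E; try contradiction.
    exists n0; split; [eapply path_dn; eauto | eauto].
  - destruct (IHpath Hxy) as [x' [Hp Hr]]. pose proof (Hh _ _ Hr) as Hk.
    unfold homogeneous_nodes in Hk. rewrite H0 in Hk.
    destruct (lab G x') eqn:E; try contradiction.
    exists n0; split; [eapply path_sw; eauto | eauto].
  - destruct (IHpath Hxy) as [x' [Hp Hr]]. pose proof (Hh _ _ Hr) as Hk.
    unfold homogeneous_nodes in Hk. rewrite H0 in Hk.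
    destruct (lab G x') eqn:E; try contradiction.
    exists n1; split; [eapply path_se; eauto | eauto].
Qed.

Lemma transfer' (R : node G -> node G -> Prop) (HR : blind_bisimulation G R) x y x' s :
  R x y -> path G x s x' -> exists y', path G y s y' /\ R x' y'.
Proof.
  destruct HR as [Hh [P1 [P2 P3]]].
  intros Hxy H; induction H.
  - exists y; split; auto; constructor.
  - destruct (IHpath Hxy) as [x' [Hp Hr]]. pose proof (Hh _ _ Hr) as Hk.
    unfold homogeneous_nodes in Hk. rewrite H0 in Hk.
    destruct (lab G x') eqn:E; try contradiction.
    exists n0; split; [eapply path_dn; eauto | eauto].
  - destruct (IHpath Hxy) as [x' [Hp Hr]]. pose proof (Hh _ _ Hr) as Hk.
    unfold homogeneous_nodes in Hk. rewrite H0 in Hk.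
    destruct (lab G x') eqn:E; try contradiction.
    exists n0; split; [eapply path_sw; eauto | eauto].
  - destruct (IHpath Hxy) as [x' [Hp Hr]]. pose proof (Hh _ _ Hr) as Hk.
    unfold homogeneous_nodes in Hk. rewrite H0 in Hk.
    destruct (lab G x') eqn:E; try contradiction.
    exists n1; split; [eapply path_se; eauto | eauto].
Qed.

End S.

Fixpoint pw (t : trace) (k : nat) : trace :=
  match k with 0 => [] | S k => t ++ pw t k end.

Lemma pw_add t d i : pw t (d + i) = pw t d ++ pw t i.
Proof. induction d; simpl; auto. rewrite IHd, app_assoc; auto. Qed.

Lemma pw_S t k : pw t k ++ t = pw t (S k).
Proof.
  induction k; simpl. now rewrite app_nil_r.
  rewrite <- app_assoc, IHk. reflexivity.
Qed.

Theorem mainTheorem7 (A : Type) (G : pre_lambda_graph A) (HG : is_lambda_graph G)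
  (R : node G -> node G -> Prop) (HR : blind_bisimulation G R)
  (n m m' : node G) (tau : trace) (Htau : tau <> []) :
  R n m -> path G m tau m' -> ~ R n m'.
Proof.
  intros Hnm Hp Hnm'.
  destruct HG as [[l Hl] [Hac _]].
  assert (Hsh : forall s z, path G m s z -> exists z', path G m (s ++ tau) z').
  { intros s z H.
    destruct (transfer G R HR _ _ _ _ Hnm H) as [x [Hx _]].
    destruct (transfer' G R HR _ _ _ _ Hnm' Hx) as [y [Hy _]].
    exists y. eapply path_app; eauto. }
  assert (Hk : forall k, exists z, path G m (pw tau k) z).
  { induction k. exists m; constructor.
    destruct IHk as [z Hz]. destruct (Hsh _ _ Hz) as [z' Hz'].
    rewrite pw_S in Hz'. eauto. }
  set (f := fun k => proj1_sig (constructive_indefinite_description _ (Hk k))).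
  assert (Hf : forall k, path G m (pw tau k) (f k)).
  { intro k. unfold f. destruct (constructive_indefinite_description _ (Hk k)); auto. }
  assert (Hd : forall i d, f i <> f (S d + i)).
  { intros i d E.
    pose proof (Hf (S d + i)) as H2. rewrite pw_add in H2.
    destruct (path_split G _ _ _ _ H2) as [b [Hb1 Hb2]].
    rewrite (path_det G _ _ _ _ Hb1 (Hf i)) in Hb2. rewrite <- E in Hb2.
    apply Hac in Hb2. simpl in Hb2. destruct tau; [congruence|discriminate]. }
  assert (Hnd : NoDup (map f (seq 0 (S (length l))))).
  { apply NoDup_map_NoDup_ForallPairs; [|apply seq_NoDup].
    intros a b _ _ E.
    destruct (Nat.lt_trichotomy a b) as [H|[H|H]]; auto.
    - exfalso. apply (Hd a (b - a - 1)). rewrite E. f_equal. lia.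
    - exfalso. apply (Hd b (a - b - 1)). rewrite <- E. f_equal. lia. }
  pose proof (NoDup_incl_length Hnd (fun x _ => Hl x)) as Hlen.
  rewrite length_map, length_seq in Hlen. lia.
Qed.
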